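(* For any simple undirected graph $G$, $$n_G(\mathcal{C}_3\oplus\mathcal{L}_2)=\frac13\sum_{\{st,uv\}\in Q}\Big(\sum_{w\in\Gamma(s)\setminus\{s,t,u,v\}}a_{tw}+\sum_{w\in\Gamma(u)\setminus\{s,t,u,v\}}a_{vw}\Big).$$
   Context: $a_{ij}$ adjacency entries, $\Gamma(x)$ neighbourhood of $x$. $Q$ is the set of unordered pairs $\{st,uv\}$ of edges with $s,t,u,v$ pairwise distinct. $\mathcal{C}_3\oplus\mathcal{L}_2$ is the disjoint union of a triangle and a single edge (5 vertices). $n_G(F)$ counts (not necessarily induced) subgraphs isomorphic to $F$. *)

(* Defs.v *)
(* A simple undirected graph on a finite vertex type T is a
   symmetric irreflexive relation adj : rel T. *)
From mathcomp Require Import all_boot all_order all_algebra.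
Set Implicit Arguments. Unset Strict Implicit. Unset Printing Implicit Defensive.

Definition aent (T : finType) (adj : rel T) (x y : T) : nat := adj x y.

Definition nbhd (T : finType) (adj : rel T) (x : T) : {set T} := [set y | adj x y].

Definition edges (T : finType) (adj : rel T) : {set {set T}} :=
  [set [set x; y] | x in T, y in T & adj x y].

Definition is_copy (F T : finType) (adjF : rel F) (V : {set T}) (E : {set {set T}}) : bool :=
  [exists f : {ffun F -> T},
     [&& injectiveb f, V == f @: setT & E == [set (f @: (e : {set F})) | e in edges adjF]]].

(* n_G(F): number of (not necessarily induced) subgraphs (V,E) of G,
   V a vertex subset and E a subset of the edges of G, isomorphic to F *)
Definition nsub (F T : finType) (adjF : rel F) (adj : rel T) : nat :=
  #|[set VE : {set T} * {set {set T}} |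
       [&& VE.2 \subset edges adj,
           [forall e in VE.2, e \subset VE.1] & is_copy adjF VE.1 VE.2]]|.

Definition C3L2_adj : rel 'I_5 := fun i j =>
  let a := nat_of_ord i in let b := nat_of_ord j in
  [|| (a < 3) && (b < 3) && (a != b),
      (a == 3) && (b == 4) | (a == 4) && (b == 3)].

Definition Qset (T : finType) (adj : rel T) : {set {set {set T}}} :=
  [set P : {set {set T}} | [exists s, exists t, exists u, exists v,
     [&& [&& s != t, s != u, s != v, t != u, t != v & u != v],
         adj s t, adj u v & P == [set [set s; t]; [set u; v]]]]].

(* For an edge e = st of the pair P (excluded vertex set X = {s,t,u,v}):
   sum_{w in Gamma(s) \ X} a_{tw} = sum_{w notin X} a_{sw} a_{tw}
   (symmetric in s,t, so well defined on the unordered edge). *)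
Definition edge_term (T : finType) (adj : rel T) (e X : {set T}) : nat :=
  \sum_(w in ~: X) \prod_(x in e) aent adj x w.

Definition Q_term (T : finType) (adj : rel T) (P : {set {set T}}) : nat :=
  \sum_(e in P) edge_term adj e (cover P).

(* Main.v *)
Require Import Defs.
From mathcomp Require Import all_boot all_order all_algebra.
Set Implicit Arguments. Unset Strict Implicit. Unset Printing Implicit Defensive.

Lemma set2C (T : finType) (a b : T) : [set a; b] = [set b; a].
Proof. by rewrite setUC. Qed.

Lemma set2_eq (T : finType) (a b c d : T) :
  [set a; b] = [set c; d] -> (a = c /\ b = d) \/ (a = d /\ b = c).
Proof.
move=> E.
have ha : a \in [set c; d] by rewrite -E set21.
have hb : b \in [set c; d] by rewrite -E set22.
have hc : c \in [set a; b] by rewrite E set21.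
have hd : d \in [set a; b] by rewrite E set22.
move: ha hb hc hd; rewrite !inE.
by do 4 (case/orP=> /eqP ?); subst; auto.
Qed.

Lemma imset2_set (aT rT : finType) (f : aT -> rT) (a b : aT) :
  f @: [set a; b] = [set f a; f b].
Proof. by rewrite imsetU1 imset_set1. Qed.

Lemma edgesP (T : finType) (r : rel T) (rs : symmetric r) (ri : irreflexive r) x y :
  ([set x; y] \in edges r) = r x y.
Proof.
apply/idP/idP.
- case/imset2P=> a b _; rewrite inE => rab /set2_eq [[-> ->]|[-> ->]] //.
  by rewrite rs.
- move=> rxy; apply/imset2P; exists x y => //; by rewrite inE.
Qed.

Lemma edges_inv (T : finType) (r : rel T) e :
  e \in edges r -> exists x y, r x y /\ e = [set x; y].
Proof. case/imset2P=> a b _; rewrite inE => rab ->; by exists a, b. Qed.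

Lemma cover2 (T : finType) (A B : {set T}) x :
  (x \in cover [set A; B]) = (x \in A) || (x \in B).
Proof.
apply/bigcupP/orP.
- by case=> C; rewrite !inE => /orP[]/eqP->; auto.
- by case=> h; [exists A | exists B]; rewrite ?inE ?eqxx ?orbT.
Qed.

Lemma prod_bool (T : finType) (adj : rel T) (e : {set T}) w :
  \prod_(x in e) aent adj x w = [forall x in e, adj x w].
Proof.
case: forall_inP => h.
- by rewrite big1 // => x /h; rewrite /aent => ->.
- have [x /andP[xe nx]] : exists x, (x \in e) && ~~ adj x w.
    apply/existsP; apply: contraT; rewrite negb_exists => /forallP H.
    by exfalso; apply: h => x xe; move: (H x); rewrite xe /= negbK.
  by rewrite (bigD1 x) //= /aent (negbTE nx).
Qed.

Lemma fiber_card (aT bT : finType) (A : {set aT}) (phi : aT -> bT) k :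
  (forall a, a \in A -> #|[set a' in A | phi a' == phi a]| = k) ->
  #|A| = k * #|phi @: A|.
Proof.
move=> H; rewrite -sum1_card (partition_big_imset phi) /=.
rewrite mulnC -sum_nat_const; apply: eq_bigr => b /imsetP [a aA ->].
by rewrite sum1_card -(H a aA) -cardsE; congr (#|_|); apply/setP=> x; rewrite !inE.
Qed.

Definition adjN (a b : nat) : bool :=  [|| (a < 3) && (b < 3) && (a != b),
      (a == 3) && (b == 4) | (a == 4) && (b == 3)].
Lemma C3N (i j : 'I_5) : C3L2_adj i j = adjN i j. Proof. by []. Qed.

Definition I5 := iota 0 5.
Definition autN : seq (seq nat) :=
 [:: [::0;1;2;3;4]; [::0;2;1;3;4]; [::1;0;2;3;4]; [::1;2;0;3;4]; [::2;0;1;3;4]; [::2;1;0;3;4];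
     [::0;1;2;4;3]; [::0;2;1;4;3]; [::1;0;2;4;3]; [::1;2;0;4;3]; [::2;0;1;4;3]; [::2;1;0;4;3]].
Definition g4N : seq (seq nat) := [:: [::0;1;2;3;4]; [::1;0;2;3;4];[::0;1;2;4;3]; [::1;0;2;4;3]].
Definition presN (s : seq nat) := all (fun i => all (fun j => adjN i j ==> adjN (nth 0 s i) (nth 0 s j)) I5) I5.

Lemma completeN : all (fun a => all (fun b => all (fun c => all (fun d => all (fun e =>
   (uniq [::a;b;c;d;e] && presN [::a;b;c;d;e]) ==> ([::a;b;c;d;e] \in autN)) I5) I5) I5) I5) I5.
Proof. by vm_compute. Qed.

Definition goodl (l : seq nat) := [&& size l == 5, all (fun k => k < 5) l, uniq l,
  all (fun i => all (fun j => adjN (nth 0 l i) (nth 0 l j) == adjN i j) I5) I5 &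
  all (fun k => has (fun i => nth 0 l i == k) I5) I5].

Lemma autN_good : all goodl autN && uniq autN && uniq g4N && all (fun l => l \in autN) g4N.
Proof. by vm_compute. Qed.

Lemma goodP l : goodl l -> [/\ size l = 5, all (fun k => k<5) l, uniq l,
   (forall i j, i < 5 -> j < 5 -> adjN (nth 0 l i) (nth 0 l j) = adjN i j) &
   (forall k, k < 5 -> exists2 i, i < 5 & nth 0 l i = k)].
Proof.
case/and5P=> /eqP s5 a5 u5 /allP p5 /allP q5; split => //.
- move=> i j hi hj; have := p5 i; rewrite mem_iota add0n hi => /(_ isT) /allP /(_ j).
  by rewrite mem_iota add0n hj => /(_ isT) /eqP.
- move=> k hk; have := q5 k; rewrite mem_iota add0n hk => /(_ isT) /hasP [i].
  by rewrite mem_iota add0n => /andP[_ hi] /eqP; exists i.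
Qed.

Definition mkf (l : seq nat) : {ffun 'I_5 -> 'I_5} := [ffun i : 'I_5 => inord (nth 0 l i)].

Lemma mkf_val l : all (fun k => k < 5) l -> forall i : 'I_5, nat_of_ord (mkf l i) = nth 0 l i.
Proof.
move=> /allP a i; rewrite ffunE inordK //.
case: (ltnP i (size l)) => h; first exact: a (mem_nth 0 h).
by rewrite nth_default.
Qed.

Lemma mkf_props l : goodl l ->
  [/\ injective (mkf l), (forall i j, C3L2_adj (mkf l i) (mkf l j) = C3L2_adj i j) &
      forall k, exists i, mkf l i = k].
Proof.
move=> /goodP [s5 a5 u5 p5 q5]; split.
- move=> i j /(congr1 val); rewrite /= !mkf_val // => /eqP.
  by rewrite nth_uniq ?s5 // => /eqP /val_inj.
- by move=> i j; rewrite !C3N !mkf_val // p5.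
- move=> k; have [i hi e] := q5 k (ltn_ord k); exists (Ordinal hi).
  by apply/val_inj; rewrite /= mkf_val.
Qed.

Definition compf (T : finType) (f : {ffun 'I_5 -> T}) (s : {ffun 'I_5 -> 'I_5}) : {ffun 'I_5 -> T} :=
  [ffun i => f (s i)].

Lemma fiber_list_card (T : finType) (f : {ffun 'I_5 -> T}) (L : seq (seq nat)) :
  injective f -> all (fun l => l \in autN) L -> uniq L ->
  #|[set g | g \in map (fun l => compf f (mkf l)) L]| = size L.
Proof.
move=> fi /allP LA uL; rewrite cardsE.
have: uniq (map (fun l => compf f (mkf l)) L).
  rewrite map_inj_in_uniq // => l1 l2 h1 h2 E.
  have g1 : goodl l1 by move: autN_good => /andP[/andP[/andP[/allP G _] _] _]; apply/G/LA.
  have g2 : goodl l2 by move: autN_good => /andP[/andP[/andP[/allP G _] _] _]; apply/G/LA.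
  case/goodP: g1 => s1 a1 _ _ _; case/goodP: g2 => s2 a2 _ _ _.
  apply: (eq_from_nth (x0 := 0)); first by rewrite s1 s2.
  move=> i; rewrite s1 => hi.
  move/ffunP: E => /(_ (Ordinal hi)); rewrite /compf !ffunE => /fi /(congr1 (@nat_of_ord 5)).
  rewrite /= !inordK //.
  - case: (ltnP i (size l2)) => h; first exact: (allP a2) _ (mem_nth 0 h). by rewrite nth_default.
  - case: (ltnP i (size l1)) => h; first exact: (allP a1) _ (mem_nth 0 h). by rewrite nth_default.
by move/card_uniqP => ->; rewrite size_map.
Qed.

Lemma compfE (T : finType) (f : {ffun 'I_5 -> T}) s i : compf f s i = f (s i).
Proof. by rewrite ffunE. Qed.

Lemma adjN_sym a b : adjN a b = adjN b a.
Proof. by case: a => [|[|[|[|[|a]]]]]; case: b => [|[|[|[|[|b]]]]]. Qed.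
Lemma C3sym : symmetric C3L2_adj.
Proof. by move=> i j; rewrite !C3N adjN_sym. Qed.
Lemma C3irr : irreflexive C3L2_adj.
Proof. move=> i; rewrite C3N /adjN eqxx /=; by case: (nat_of_ord i) => [|[|[|[|[|a]]]]]. Qed.

Definition homb (T : finType) (adj : rel T) (f : {ffun 'I_5 -> T}) :=
  [forall i, forall j, C3L2_adj i j ==> adj (f i) (f j)].
Definition Hset (T : finType) (adj : rel T) := [set f : {ffun 'I_5 -> T} | injectiveb f && homb adj f].
Definition Phi (T : finType) (f : {ffun 'I_5 -> T}) : {set T} * {set {set T}} :=
  (f @: setT, [set (f @: (e : {set 'I_5})) | e in edges C3L2_adj]).
Arguments Phi {T}.
Definition Sset (T : finType) (adj : rel T) :=
  [set VE : {set T} * {set {set T}} |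
       [&& VE.2 \subset edges adj,
           [forall e in VE.2, e \subset VE.1] & is_copy C3L2_adj VE.1 VE.2]].

Lemma HsetP (T : finType) (adj : rel T) (f : {ffun 'I_5 -> T}) :
  reflect (injective f /\ forall i j, C3L2_adj i j -> adj (f i) (f j)) (f \in Hset adj).
Proof.
rewrite inE; apply: (iffP andP) => [[/injectiveP fi /forallP h]|[fi h]]; split => //.
- by move=> i j; move: (h i) => /forallP /(_ j) /implyP.
- exact/injectiveP.
- by apply/forallP => i; apply/forallP => j; apply/implyP; apply: h.
Qed.

Lemma A1 (T : finType) (adj : rel T) (adj_sym : symmetric adj) (adj_irr : irreflexive adj) :
  Sset adj = Phi @: Hset adj.
Proof.
apply/setP => [[V E]]; rewrite inE /=; apply/idP/imsetP.
- case/and3P=> sE _ /existsP [f /and3P [fi /eqP eV /eqP eE]].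
  exists f; last by rewrite /Phi eV eE.
  apply/HsetP; split; first exact/injectiveP.
  move=> i j cij; rewrite -(edgesP adj_sym adj_irr) -imset2_set; apply: (subsetP sE).
  by rewrite eE; apply: imset_f; rewrite edgesP //; [exact: C3sym | exact: C3irr].
- case=> f /HsetP [fi fh] [-> ->]; apply/and3P; split.
  + apply/subsetP => e /imsetP [e' /edges_inv [i [j [cij ->]]] ->].
    by rewrite imset2_set edgesP //; apply: fh.
  + apply/forall_inP => e /imsetP [e' _ ->]; exact/imsetS/subsetT.
  + apply/existsP; exists f; rewrite !eqxx !andbT; exact/injectiveP.
Qed.

Lemma comp_good_H (T : finType) (adj : rel T) (f : {ffun 'I_5 -> T}) l :
  f \in Hset adj -> goodl l -> compf f (mkf l) \in Hset adj.
Proof.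
move=> /HsetP [fi fh] /mkf_props [si sp _]; apply/HsetP; split.
- by move=> i j; rewrite !compfE => /fi /si.
- by move=> i j cij; rewrite !compfE; apply: fh; rewrite sp.
Qed.

Definition o0 : 'I_5 := @Ordinal 5 0 isT.
Definition o1 : 'I_5 := @Ordinal 5 1 isT.
Definition o2 : 'I_5 := @Ordinal 5 2 isT.
Definition o3 : 'I_5 := @Ordinal 5 3 isT.
Definition o4 : 'I_5 := @Ordinal 5 4 isT.

Lemma autN_goodl l : l \in autN -> goodl l.
Proof. by move: autN_good => /andP[/andP[/andP[/allP G _] _] _]; apply: G. Qed.

Lemma A2 (T : finType) (adj : rel T) (f : {ffun 'I_5 -> T}) : f \in Hset adj ->
  [set g in Hset adj | Phi g == Phi f] = [set g | g \in map (fun l => compf f (mkf l)) autN].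
Proof.
move=> fH; have [fi fh] := HsetP _ _ fH.
apply/setP => g; rewrite !in_set; apply/idP/idP.
- case/andP=> gH0 /eqP [hT hE]; have gH : g \in Hset adj by rewrite inE.
  have [gi gh] := HsetP _ _ gH.
  have ex j : exists i, f i == g j.
    have : g j \in g @: setT by apply: imset_f.
    by rewrite hT => /imsetP [i _ ->]; exists i.
  pose s := [ffun j => odflt j [pick i | f i == g j]].
  have fs j : f (s j) = g j.
    rewrite ffunE; case: pickP => [i /eqP //|H].
    by case: (ex j) => i; rewrite H.
  have si i j : s i = s j -> i = j by move=> e; apply: gi; rewrite -!fs e.
  have sp i j : C3L2_adj i j -> C3L2_adj (s i) (s j).
    move=> cij.
    have : g @: [set i; j] \in [set g @: (e : {set 'I_5}) | e in edges C3L2_adj].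
      by apply: imset_f; rewrite edgesP //; [exact: C3sym | exact: C3irr].
    rewrite hE => /imsetP [e eE].
    rewrite !imset2_set -!fs -imset2_set => /(imset_inj fi) ee.
    by move: eE; rewrite -ee edgesP //; [exact: C3sym | exact: C3irr].
  pose l := [:: nat_of_ord (s o0); nat_of_ord (s o1); nat_of_ord (s o2); nat_of_ord (s o3); nat_of_ord (s o4)].
  have nthl k (hk : k < 5) : nth 0 l k = s (Ordinal hk).
    by case: k hk => [|[|[|[|[|k]]]]] hk //=; congr (nat_of_ord (s _)); apply/val_inj.
  have lA : l \in autN.
    have inI5 (i : 'I_5) : nat_of_ord i \in I5 by rewrite mem_iota ltn_ord.
    have := completeN; move/allP/(_ _ (inI5 (s o0)))/allP/(_ _ (inI5 (s o1))).
    move/allP/(_ _ (inI5 (s o2)))/allP/(_ _ (inI5 (s o3)))/allP/(_ _ (inI5 (s o4))).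
    move/implyP; apply; apply/andP; split.
    - rewrite /= !inE !negb_or -!andbA.
      by repeat (apply/andP; split); try (apply/negP => /eqP /val_inj /si /(congr1 val)).
    - apply/allP => i; rewrite mem_iota add0n => /andP[_ hi].
      apply/allP => j; rewrite mem_iota add0n => /andP[_ hj].
      apply/implyP => aij; rewrite -/l !nthl -C3N; apply: sp.
      by rewrite C3N.
  have ls : mkf l = s.
    apply/ffunP => i; rewrite ffunE (nthl i (ltn_ord i)).
    have -> : Ordinal (ltn_ord i) = i by apply/val_inj.
    by rewrite inord_val.
  apply/mapP; exists l => //; apply/ffunP => i; by rewrite compfE ls fs.
- case/mapP => l lA ->.
  have gl := autN_goodl lA.
  have := comp_good_H fH gl; rewrite inE => -> /=.
  have [si sp ss] := mkf_props gl.
  apply/eqP; rewrite /Phi; f_equal.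
  + apply/setP => y; apply/imsetP/imsetP => [[i _ ->]|[i _ ->]].
    * by exists (mkf l i) => //; rewrite compfE.
    * by have [j ej] := ss i; exists j => //; rewrite compfE ej.
  + apply/setP => E; apply/imsetP/imsetP => [[e eE ->]|[e eE ->]].
    * exists (mkf l @: e).
        move: eE => /edges_inv [i [j [cij ->]]].
        by rewrite imset2_set (edgesP C3sym C3irr) sp.
      by rewrite -imset_comp; apply: eq_imset => x; rewrite compfE.
    * move: eE => /edges_inv [i [j [cij ->]]].
      have [i' ei] := ss i; have [j' ej] := ss j.
      exists [set i'; j'].
        by rewrite (edgesP C3sym C3irr) -sp ei ej.
      by rewrite !imset2_set !compfE ei ej.
Qed.

Lemma partA (T : finType) (adj : rel T) (adj_sym : symmetric adj) (adj_irr : irreflexive adj) :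
  #|Hset adj| = 12 * #|Sset adj|.
Proof.
rewrite A1 //; apply: fiber_card => f fH; rewrite A2 // fiber_list_card //.
all: try by case/HsetP: fH => fi _; exact: fi.
all: try by apply/allP.
all: try by move: autN_good => /andP[/andP[/andP[_ ->] _] _].
Qed.

Definition Psi (T : finType) (f : {ffun 'I_5 -> T}) : ({set {set T}} * {set T}) * T :=
  (([set [set f o0; f o1]; [set f o3; f o4]], [set f o0; f o1]), f o2).
Arguments Psi {T}.
Definition Dset (T : finType) (adj : rel T) :=
  [set x : ({set {set T}} * {set T}) * T | [&& x.1.1 \in Qset adj, x.1.2 \in x.1.1,
      x.2 \in ~: cover x.1.1 & [forall y in x.1.2, adj y x.2]]].

Lemma B0 (T : finType) (adj : rel T) :
  (\sum_(P in Qset adj) Q_term adj P)%N = #|Dset adj|.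
Proof.
transitivity (\sum_P \sum_e \sum_w ((((P, e), w) \in Dset adj) : nat))%N.
  rewrite big_mkcond; apply: eq_bigr => P _.
  case: (boolP (P \in Qset adj)) => PQ; last first.
    by rewrite big1 // => e _; rewrite big1 // => w _; rewrite inE (negbTE PQ).
  rewrite /Q_term big_mkcond; apply: eq_bigr => e _.
  case: (boolP (e \in P)) => eP; last first.
    by rewrite big1 // => w _; rewrite inE (negbTE eP) andbF.
  rewrite /edge_term big_mkcond; apply: eq_bigr => w _.
  rewrite prod_bool [in RHS]inE /= PQ eP /= in_setC; by case: (w \in cover P).
rewrite pair_bigA pair_bigA -sum1_card big_mkcond /=.
rewrite [RHS]big_mkcond; apply: eq_bigr => [[[P e] w]] _ /=; by case: ifP.
Qed.

Definition mk5 (T : finType) (s t w u v : T) : {ffun 'I_5 -> T} :=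
  [ffun i : 'I_5 => nth s [:: s; t; w; u; v] i].

Lemma uniq5 (T : eqType) (s t w u v : T) :
  s != t -> s != u -> s != v -> t != u -> t != v -> u != v ->
  w != s -> w != t -> w != u -> w != v -> uniq [:: s; t; w; u; v].
Proof.
move=> h1 h2 h3 h4 h5 h6 h7 h8 h9 h10.
rewrite /= !inE !negb_or (eq_sym s w) (eq_sym t w).
by rewrite h1 h2 h3 h4 h5 h6 h7 h8 h9 h10.
Qed.

Lemma mk5_H (T : finType) (adj : rel T) (adj_sym : symmetric adj) (s t w u v : T) :
  uniq [:: s; t; w; u; v] -> adj s t -> adj u v -> adj s w -> adj t w ->
  mk5 s t w u v \in Hset adj.
Proof.
move=> un ast auv asw atw; apply/HsetP; split.
- move=> i j; rewrite !ffunE => /eqP; rewrite nth_uniq //= => /eqP; exact: val_inj.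
- move=> [i hi] [j hj]; rewrite C3N !ffunE /=.
  case: i hi => [|[|[|[|[|i]]]]] hi; case: j hj => [|[|[|[|[|j]]]]] hj //=;
  by rewrite ?(adj_sym t s) ?(adj_sym w s) ?(adj_sym w t) ?(adj_sym v u).
Qed.

Lemma mk5_Psi (T : finType) (s t w u v : T) :
  Psi (mk5 s t w u v) = (([set [set s; t]; [set u; v]], [set s; t]), w).
Proof. by rewrite /Psi !ffunE. Qed.

Lemma B1 (T : finType) (adj : rel T) (adj_sym : symmetric adj) (adj_irr : irreflexive adj) :
  Dset adj = Psi @: Hset adj.
Proof.
apply/setP => x; apply/idP/imsetP => [|[f fH ->]].
- case: x => [[P e] w]; rewrite inE /= => /and4P [PQ eP wP fa].
  move: PQ; rewrite inE => /existsP [s /existsP [t /existsP [u /existsP [v /and4P [dist ast auv /eqP PE]]]]].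
  subst P; move: wP; rewrite in_setC cover2 !inE !negb_or => /andP [/andP [ws wt] /andP [wu wv]].
  move: dist => /and5P [st su sv tu /andP [tv uv]].
  case/set2P: eP => ?; subst e.
  + have asw : adj s w by apply: (forall_inP fa); rewrite set21.
    have atw : adj t w by apply: (forall_inP fa); rewrite set22.
    exists (mk5 s t w u v); last by rewrite mk5_Psi.
    by apply: mk5_H => //; apply: uniq5.
  + have auw : adj u w by apply: (forall_inP fa); rewrite set21.
    have avw : adj v w by apply: (forall_inP fa); rewrite set22.
    exists (mk5 u v w s t); last by rewrite mk5_Psi setUC.
    apply: mk5_H => //; apply: uniq5 => //; by rewrite eq_sym.
- have [fi fh] := HsetP _ _ fH.
  have fn i j : i != j -> f i != f j by apply: contra => /eqP /fi ->.
  rewrite inE /=; apply/and4P; split.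
  + rewrite inE; apply/existsP; exists (f o0); apply/existsP; exists (f o1).
    apply/existsP; exists (f o3); apply/existsP; exists (f o4).
    by rewrite !fn // ?fh // eqxx.
  + exact: set21.
  + by rewrite in_setC cover2 !inE !negb_or !fn.
  + by apply/forall_inP => y; rewrite !inE => /orP [] /eqP ->; apply: fh.
Qed.

Lemma mkfE l i : mkf l i = inord (nth 0 l i).
Proof. by rewrite ffunE. Qed.

Lemma io0 : inord 0 = o0. Proof. by apply/val_inj; rewrite /= inordK. Qed.
Lemma io1 : inord 1 = o1. Proof. by apply/val_inj; rewrite /= inordK. Qed.
Lemma io2 : inord 2 = o2. Proof. by apply/val_inj; rewrite /= inordK. Qed.
Lemma io3 : inord 3 = o3. Proof. by apply/val_inj; rewrite /= inordK. Qed.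
Lemma io4 : inord 4 = o4. Proof. by apply/val_inj; rewrite /= inordK. Qed.

Lemma ffun5 (T : finType) (g h : {ffun 'I_5 -> T}) :
  g o0 = h o0 -> g o1 = h o1 -> g o2 = h o2 -> g o3 = h o3 -> g o4 = h o4 -> g = h.
Proof.
move=> H0 H1 H2 H3 H4.
have E k (h1 h2 : k < 5) : Ordinal h1 = Ordinal h2 by apply/val_inj.
apply/ffunP => -[[|[|[|[|[|i]]]]] hi]; rewrite ?(E _ hi isT).
- exact: H0.
- exact: H1.
- exact: H2.
- exact: H3.
- exact: H4.
- by [].
Qed.

Lemma B2 (T : finType) (adj : rel T) (f : {ffun 'I_5 -> T}) : f \in Hset adj ->
  [set g in Hset adj | Psi g == Psi f] = [set g | g \in map (fun l => compf f (mkf l)) g4N].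
Proof.
move=> fH; have [fi fh] := HsetP _ _ fH.
apply/setP => g; rewrite !in_set; apply/idP/idP.
- case/andP=> gH0 /eqP [hP he hw]; have gH : g \in Hset adj by rewrite inE.
  have [gi gh] := HsetP _ _ gH.
  have h34 : [set g o3; g o4] = [set f o3; f o4].
    have : [set g o3; g o4] \in [set [set f o0; f o1]; [set f o3; f o4]] by rewrite -hP set22.
    case/set2P => // E; exfalso.
    have : g o3 \in [set g o0; g o1] by rewrite he -E set21.
    by rewrite !inE => /orP [] /eqP /gi.
  apply/mapP.
  case: (set2_eq he) => [[e0 e1]|[e0 e1]]; case: (set2_eq h34) => [[e3 e4]|[e3 e4]].
  + exists [:: 0; 1; 2; 3; 4]; first by [].
    by apply: ffun5; rewrite compfE mkfE /= ?io0 ?io1 ?io2 ?io3 ?io4.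
  + exists [:: 0; 1; 2; 4; 3]; first by [].
    by apply: ffun5; rewrite compfE mkfE /= ?io0 ?io1 ?io2 ?io3 ?io4.
  + exists [:: 1; 0; 2; 3; 4]; first by [].
    by apply: ffun5; rewrite compfE mkfE /= ?io0 ?io1 ?io2 ?io3 ?io4.
  + exists [:: 1; 0; 2; 4; 3]; first by [].
    by apply: ffun5; rewrite compfE mkfE /= ?io0 ?io1 ?io2 ?io3 ?io4.
- case/mapP => l lG ->.
  have lA : l \in autN.
    by move: autN_good => /andP[_ /allP]; apply.
  have := comp_good_H fH (autN_goodl lA); rewrite inE => -> /=.
  apply/eqP; rewrite /Psi !compfE !mkfE.
  move: lG; rewrite !inE => /or4P [] /eqP -> /=; rewrite ?io0 ?io1 ?io2 ?io3 ?io4 //.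
  + by rewrite (set2C (f o1)).
  + by rewrite (set2C (f o4)).
  + by rewrite (set2C (f o1)) (set2C (f o4)).
Qed.

Lemma partB (T : finType) (adj : rel T) (adj_sym : symmetric adj) (adj_irr : irreflexive adj) :
  #|Hset adj| = 4 * (\sum_(P in Qset adj) Q_term adj P)%N.
Proof.
rewrite B0 B1 //; apply: fiber_card => f fH; rewrite B2 // fiber_list_card //.
all: try by case/HsetP: fH => fi _; exact: fi.
all: try by move: autN_good => /andP[_ ->].
all: try by move: autN_good => /andP[/andP[_ ->] _].
Qed.

Unset Implicit Arguments.
Import GRing.Theory.
Local Open Scope ring_scope.

Theorem proposition4 (T : finType) (adj : rel T)
    (adj_sym : symmetric adj) (adj_irr : irreflexive adj) :
  ((nsub C3L2_adj adj)%:R : rat) =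
    3^-1 * (\sum_(P in Qset adj) Q_term adj P)%N%:R.
Proof.
have hA := partA adj_sym adj_irr; have hB := partB adj_sym adj_irr.
have e : (\sum_(P in Qset adj) Q_term adj P)%N = (3 * nsub C3L2_adj adj)%N.
  apply/eqP; rewrite -(eqn_pmul2l (isT : (0 < 4)%N)) -hB hA mulnA.
  by [].
by rewrite e natrM mulrA mulVf ?mul1r.
Qed.
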